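(* Let $w$ be a nonnegative continuous weight function on $[-1,1]$, let $\{p_l\}_{l\ge 0}$ be the orthonormal polynomials for $\langle f,g\rangle_w=\int_{-1}^1 f(x)\overline{g(x)}w(x)\,dx$ (with $\deg p_l=l$ and positive leading coefficient), satisfying the three-term recurrence $b_{l+1}p_{l+1}(x)=(x-a_l)p_l(x)-b_lp_{l-1}(x)$, $l\ge 0$, $p_{-1}=0$, $p_0=1/b_0$, with $a_l\in\mathbb{R}$, $b_l>0$. Let $0\le m\le n$ be integers and let $\mathcal{R}(x)=p_m(x)+\sum_{l=0}^{m-1}e_lp_l(x)$ with $e_l\in\mathbb{C}$. Put $\gamma_{\mathcal{R}}:=\varepsilon(\mathcal{R})-a_m$ and $\delta_{\mathcal{R}}:=\|\mathcal{R}\|_w^2$. Let $\lambda_{n+1}$, $\lambda^m_{n-m+1}$ and $\lambda^{\mathcal{R}}_{n-m+1}$ denote the largest zero in $[-1,1]$ of $p_{n+1}(x)$, of $p_{n-m+1}(x,m)$ and of $p_{n-m+1}(x,m,\gamma_{\mathcal{R}},\delta_{\mathcal{R}})$, respectively. Then: (1) The maximizers of $\varepsilon$ over $\mathbb{S}_n$ are exactly the polynomials $\mathcal{P}_n(x)=\kappa_1\sum_{l=0}^n p_l(\lambda_{n+1})p_l(x)$, where $\kappa_1\in\mathbb{C}$ is such that $\|\mathcal{P}_n\|_w=1$ (so $\mathcal{P}_n$ is unique up to multiplication by a complex scalar of absolute value one), and $\max_{P\in\mathbb{S}_n}\varepsilon(P)=\lambda_{n+1}$. (2) The maximizers of $\varepsilon$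 over $\mathbb{S}_n^m$ are exactly the polynomials $\mathcal{P}_n^m(x)=\kappa_2\sum_{l=m}^n p_{l-m}(\lambda^m_{n-m+1},m)\,p_l(x)$, where $\kappa_2\in\mathbb{C}$ is such that $\|\mathcal{P}^m_n\|_w=1$ (unique up to a unimodular scalar), and $\max_{P\in\mathbb{S}^m_n}\varepsilon(P)=\lambda^m_{n-m+1}$. (3) The maximizers of $\varepsilon$ over $\mathbb{S}_n^{\mathcal{R}}$ are exactly the polynomials $\mathcal{P}_n^{\mathcal{R}}(x)=\kappa_3\big(\mathcal{R}(x)+\sum_{l=m+1}^n p_{l-m}(\lambda^{\mathcal{R}}_{n-m+1},m,\gamma_{\mathcal{R}},\delta_{\mathcal{R}})\,p_l(x)\big)$, where $\kappa_3\in\mathbb{C}$ is such that $\|\mathcal{P}^{\mathcal{R}}_n\|_w=1$ (unique up to a unimodular scalar), and $\max_{P\in\mathbb{S}^{\mathcal{R}}_n}\varepsilon(P)=\lambda^{\mathcal{R}}_{n-m+1}$.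
   Context: For $f\in L^2([-1,1],w)$, $\varepsilon(f):=\int_{-1}^1 x|f(x)|^2w(x)\,dx$ and $\|f\|_w^2=\langle f,f\rangle_w$. Polynomial spaces: $\Pi_n=\{\sum_{l=0}^n c_lp_l: c_l\in\mathbb{C}\}$, $\Pi_n^m=\{\sum_{l=m}^n c_lp_l: c_l\in\mathbb{C}\}$, $\Pi_n^{\mathcal{R}}=\{c_m\mathcal{R}+\sum_{l=m+1}^n c_lp_l: c_l\in\mathbb{C}\}$; their unit spheres are $\mathbb{S}_n,\mathbb{S}_n^m,\mathbb{S}_n^{\mathcal{R}}$ (elements with $\|P\|_w=1$). Associated polynomials $p_l(x,m)$: $p_{-1}(x,m)=0$, $p_0(x,m)=1$, $b_{m+l+1}p_{l+1}(x,m)=(x-a_{m+l})p_l(x,m)-b_{m+l}p_{l-1}(x,m)$ for $l\ge0$. Scaled co-recursive associated polynomials, for $\gamma\in\mathbb{R}$, $\delta\ge 0$: $p_0(x,m,\gamma,\delta)=1$, $p_1(x,m,\gamma,\delta)=(\delta x-a_m-\gamma)/b_{m+1}$, and $b_{m+l+1}p_{l+1}(x,m,\gamma,\delta)=(x-a_{m+l})p_l(x,m,\gamma,\delta)-b_{m+l}p_{l-1}(x,m,\gamma,\delta)$ for $l\ge1$. *)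

(* Defs.v *)
From Stdlib Require Import Reals.
From Coquelicot Require Import Coquelicot.
Open Scope R_scope.

Definition cabs2 (z : C) : R := Cmod z ^ 2.

Definition eps (w : R -> R) (f : R -> C) : R :=
  RInt (fun x => x * cabs2 (f x) * w x) (-1) 1.

Definition wnorm2 (w : R -> R) (f : R -> C) : R :=
  RInt (fun x => cabs2 (f x) * w x) (-1) 1.

Definition cont_on_11 (w : R -> R) : Prop :=
  forall x, -1 <= x <= 1 -> forall e, 0 < e -> exists d, 0 < d /\
    forall y, -1 <= y <= 1 -> Rabs (y - x) < d -> Rabs (w y - w x) < e.

(* Orthonormal polynomials via the three-term recurrence:
   p_{-1}=0, p_0=1/b_0, b_{l+1} p_{l+1} = (x-a_l) p_l - b_l p_{l-1}.
   opq_pair returns (p_l(x), p_{l-1}(x)). *)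
Fixpoint opq_pair (a b : nat -> R) (x : R) (l : nat) : R * R :=
  match l with
  | O => (1 / b O, 0)
  | S k => let (pk, pkm1) := opq_pair a b x k in
           (((x - a k) * pk - b k * pkm1) / b (S k), pk)
  end.
Definition opq (a b : nat -> R) (l : nat) (x : R) : R := fst (opq_pair a b x l).

Fixpoint assoc_pair (a b : nat -> R) (m : nat) (x : R) (l : nat) : R * R :=
  match l with
  | O => (1, 0)
  | S k => let (pk, pkm1) := assoc_pair a b m x k in
           (((x - a (m + k)%nat) * pk - b (m + k)%nat * pkm1) / b (m + k + 1)%nat, pk)
  end.
Definition assocp (a b : nat -> R) (l m : nat) (x : R) : R := fst (assoc_pair a b m x l).

Fixpoint corec_pair (a b : nat -> R) (m : nat) (g d x : R) (l : nat) : R * R :=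
  match l with
  | O => (1, 0)
  | S k =>
      match k with
      | O => ((d * x - a m - g) / b (m + 1)%nat, 1)
      | S _ => let (pk, pkm1) := corec_pair a b m g d x k in
               (((x - a (m + k)%nat) * pk - b (m + k)%nat * pkm1) / b (m + k + 1)%nat, pk)
      end
  end.
Definition corecp (a b : nat -> R) (l m : nat) (g d x : R) : R :=
  fst (corec_pair a b m g d x l).

Fixpoint csum_lt (f : nat -> C) (k : nat) : C :=
  match k with O => RtoC 0 | S j => Cplus (csum_lt f j) (f j) end.

Definition cterm (a b : nat -> R) (c : nat -> C) (l : nat) (x : R) : C :=
  Cmult (c l) (RtoC (opq a b l x)).

Definition inPi_m (a b : nat -> R) (m n : nat) (f : R -> C) : Prop :=
  exists c : nat -> C, forall x, f x = sum_n_m (fun l => cterm a b c l x) m n.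
Definition inPi (a b : nat -> R) (n : nat) (f : R -> C) : Prop := inPi_m a b 0 n f.

Definition inPi_R (a b : nat -> R) (Rp : R -> C) (m n : nat) (f : R -> C) : Prop :=
  exists c : nat -> C, forall x,
    f x = Cplus (Cmult (c m) (Rp x)) (sum_n_m (fun l => cterm a b c l x) (m + 1) n).

Definition unit_sphere (w : R -> R) (S : (R -> C) -> Prop) (f : R -> C) : Prop :=
  S f /\ wnorm2 w f = 1.

Definition is_maximizer (w : R -> R) (S : (R -> C) -> Prop) (f : R -> C) : Prop :=
  S f /\ forall g, S g -> eps w g <= eps w f.

Definition largest_zero_11 (q : R -> R) (lam : R) : Prop :=
  -1 <= lam <= 1 /\ q lam = 0 /\ forall y, -1 <= y <= 1 -> q y = 0 -> y <= lam.

Definition max_eps_is (w : R -> R) (S : (R -> C) -> Prop) (M : R) : Prop :=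
  (exists f, S f /\ eps w f = M) /\ forall f, S f -> eps w f <= M.

Definition Rpoly (a b : nat -> R) (m : nat) (e : nat -> C) (x : R) : C :=
  Cplus (RtoC (opq a b m x)) (csum_lt (fun l => cterm a b e l x) m).

(* Main.v *)
Require Import Defs.
From Stdlib Require Import Reals.
From Coquelicot Require Import Coquelicot.
Open Scope R_scope.
From Stdlib Require Import Lra Lia.

Fixpoint rs (f : nat -> R) (k : nat) : R :=
  match k with O => 0 | S j => rs f j + f j end.

Lemma rs_ext f g k : (forall j, (j < k)%nat -> f j = g j) -> rs f k = rs g k.
Proof. induction k; simpl; intros H; auto. rewrite IHk by (intros; apply H; lia). rewrite H by lia. auto. Qed.
Lemma rs_plus f g k : rs (fun j => f j + g j) k = rs f k + rs g k.
Proof. induction k; simpl; [ring| rewrite IHk; ring]. Qed.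
Lemma rs_scal c f k : rs (fun j => c * f j) k = c * rs f k.
Proof. induction k; simpl; [ring| rewrite IHk; ring]. Qed.
Lemma rs_zero f k : (forall j, (j < k)%nat -> f j = 0) -> rs f k = 0.
Proof. induction k; simpl; intros H. auto. rewrite IHk by (intros; apply H; lia). rewrite H by lia. ring. Qed.
Lemma rs_nonneg f k : (forall j, (j < k)%nat -> 0 <= f j) -> 0 <= rs f k.
Proof. induction k; simpl; intros H. lra. assert (0 <= f k) by (apply H; lia). assert (0 <= rs f k) by (apply IHk; intros; apply H; lia). lra. Qed.
Lemma rs_le_term f k j : (forall i, (i < k)%nat -> 0 <= f i) -> (j < k)%nat -> f j <= rs f k.
Proof. induction k; simpl; intros H Hj. lia. assert (0 <= rs f k) by (apply rs_nonneg; intros; apply H; lia).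
 destruct (Nat.eq_dec j k). subst; lra. assert (f j <= rs f k) by (apply IHk; [intros; apply H; lia| lia]). assert (0 <= f k) by (apply H; lia). lra. Qed.
Lemma rs_zero_terms f k : (forall i, (i < k)%nat -> 0 <= f i) -> rs f k = 0 -> forall j, (j < k)%nat -> f j = 0.
Proof. intros H Hs j Hj. assert (f j <= rs f k) by (apply rs_le_term; auto). assert (0 <= f j) by auto. lra. Qed.

Lemma opq_0 a b x : opq a b 0 x = 1 / b 0%nat.
Proof. reflexivity. Qed.
Lemma opq_pair_S a b x k : opq_pair a b x (S k) =
  (((x - a k) * opq a b k x - b k * snd (opq_pair a b x k)) / b (S k), opq a b k x).
Proof. simpl. unfold opq. destruct (opq_pair a b x k); reflexivity. Qed.
Lemma opq_S a b x k : opq a b (S k) x =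
  ((x - a k) * opq a b k x - b k * snd (opq_pair a b x k)) / b (S k).
Proof. unfold opq at 1. rewrite opq_pair_S. reflexivity. Qed.
Lemma opq_snd0 a b x : snd (opq_pair a b x 0) = 0.
Proof. reflexivity. Qed.
Lemma opq_sndS a b x k : snd (opq_pair a b x (S k)) = opq a b k x.
Proof. rewrite opq_pair_S. reflexivity. Qed.

Lemma assoc_pair_S a b m x k : assoc_pair a b m x (S k) =
  (((x - a (m + k)%nat) * assocp a b k m x - b (m + k)%nat * snd (assoc_pair a b m x k)) / b (m + k + 1)%nat, assocp a b k m x).
Proof. simpl. unfold assocp. destruct (assoc_pair a b m x k); reflexivity. Qed.
Lemma assocp_S a b m x k : assocp a b (S k) m x =
  ((x - a (m + k)%nat) * assocp a b k m x - b (m + k)%nat * snd (assoc_pair a b m x k)) / b (m + k + 1)%nat.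
Proof. unfold assocp at 1. rewrite assoc_pair_S. reflexivity. Qed.
Lemma assoc_sndS a b m x k : snd (assoc_pair a b m x (S k)) = assocp a b k m x.
Proof. rewrite assoc_pair_S. reflexivity. Qed.

Lemma corecp_0 a b m g d x : corecp a b 0 m g d x = 1.
Proof. reflexivity. Qed.
Lemma corecp_1 a b m g d x : corecp a b 1 m g d x = (d * x - a m - g) / b (m + 1)%nat.
Proof. reflexivity. Qed.
Lemma corec_sndS a b m g d x k : snd (corec_pair a b m g d x (S k)) = corecp a b k m g d x.
Proof. destruct k. reflexivity. unfold corecp. simpl. destruct k. reflexivity.
  destruct (corec_pair a b m g d x (S k)); reflexivity. Qed.
Lemma corecp_SS a b m g d x k : corecp a b (S (S k)) m g d x =
  ((x - a (m + S k)%nat) * corecp a b (S k) m g d x - b (m + S k)%nat * corecp a b k m g d x) / b (m + S k + 1)%nat.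
Proof. rewrite <- (corec_sndS a b m g d x k). unfold corecp.
  assert (E : corec_pair a b m g d x (S (S k)) = let (pk, pkm1) := corec_pair a b m g d x (S k) in
     (((x - a (m + S k)%nat) * pk - b (m + S k)%nat * pkm1) / b (m + S k + 1)%nat, pk)) by reflexivity.
  rewrite E. destruct (corec_pair a b m g d x (S k)); reflexivity. Qed.

Definition Cont (f : R -> R) := forall x, continuous f x.
Lemma Cont_const c : Cont (fun _ => c).
Proof. intros x; apply continuous_const. Qed.
Lemma Cont_id : Cont (fun x => x).
Proof. intros x; apply continuous_id. Qed.
Lemma Cont_plus f g : Cont f -> Cont g -> Cont (fun x => f x + g x).
Proof. intros Hf Hg x. apply (continuous_plus f g x); auto. Qed.
Lemma Cont_mult f g : Cont f -> Cont g -> Cont (fun x => f x * g x).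
Proof. intros Hf Hg x. apply (continuous_mult f g x); auto. Qed.
Lemma Cont_opp f : Cont f -> Cont (fun x => - f x).
Proof. intros Hf x. apply (continuous_opp f x); auto. Qed.
Lemma Cont_minus f g : Cont f -> Cont g -> Cont (fun x => f x - g x).
Proof. intros Hf Hg. apply Cont_plus; auto. apply Cont_opp; auto. Qed.
Lemma Cont_scal c f : Cont f -> Cont (fun x => c * f x).
Proof. intros; apply Cont_mult; auto using Cont_const. Qed.
Lemma Cont_ext f g : (forall x, f x = g x) -> Cont f -> Cont g.
Proof. intros E H x. apply (continuous_ext f g x E (H x)). Qed.
Lemma Cont_div f c : Cont f -> Cont (fun x => f x / c).
Proof. intros H. apply (Cont_ext (fun x => / c * f x)). intros; unfold Rdiv; ring. apply Cont_scal; auto. Qed.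
Lemma Cont_rs (F : nat -> R -> R) k : (forall j, Cont (F j)) -> Cont (fun x => rs (fun j => F j x) k).
Proof. intros H. induction k; simpl. apply Cont_const. apply Cont_plus; auto. Qed.

Lemma Cont_opq a b k : Cont (opq a b k) /\ Cont (fun x => snd (opq_pair a b x k)).
Proof.
  induction k.
  - split. unfold opq; simpl. apply Cont_const. apply (Cont_ext (fun _ => 0)). reflexivity. apply Cont_const.
  - destruct IHk as [H1 H2]. split.
    + apply (Cont_ext (fun x => ((x - a k) * opq a b k x - b k * snd (opq_pair a b x k)) / b (S k))).
      intros; rewrite opq_S; auto.
      apply Cont_div. apply Cont_minus. apply Cont_mult; auto. apply Cont_minus. apply Cont_id. apply Cont_const.
      apply Cont_scal; auto.
    + apply (Cont_ext (opq a b k)). intros; rewrite opq_sndS; auto. auto.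
Qed.

Lemma Cont_corec a b m g d k : Cont (corecp a b k m g d) /\ Cont (corecp a b (S k) m g d).
Proof.
  induction k.
  - split. apply (Cont_ext (fun _ => 1)). reflexivity. apply Cont_const. apply (Cont_ext (fun x => (d * x - a m - g) / b (m + 1)%nat)).
    intros; rewrite corecp_1; auto. apply Cont_div. apply Cont_minus. apply Cont_minus. apply Cont_scal, Cont_id.
    apply Cont_const. apply Cont_const.
  - destruct IHk as [H1 H2]. split; auto.
    apply (Cont_ext (fun x => ((x - a (m + S k)%nat) * corecp a b (S k) m g d x - b (m + S k)%nat * corecp a b k m g d x) / b (m + S k + 1)%nat)).
    intros; rewrite corecp_SS; auto.
    apply Cont_div. apply Cont_minus. apply Cont_mult; auto. apply Cont_minus. apply Cont_id. apply Cont_const.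
    apply Cont_scal; auto.
Qed.

Lemma Cont_continuity f : Cont f -> continuity f.
Proof. intros H x. apply continuity_pt_filterlim. apply H. Qed.

Section Anal.
Variable w : R -> R.
Hypothesis Hw_nonneg : forall x, -1 <= x <= 1 -> 0 <= w x.
Hypothesis Hw_cont : cont_on_11 w.

Definition clamp x := Rmax (-1) (Rmin 1 x).
Lemma clamp_in x : -1 <= clamp x <= 1.
Proof. unfold clamp, Rmax, Rmin. repeat destruct Rle_dec; lra. Qed.
Lemma clamp_id x : -1 <= x <= 1 -> clamp x = x.
Proof. unfold clamp, Rmax, Rmin. repeat destruct Rle_dec; lra. Qed.
Lemma clamp_lip x y : Rabs (clamp y - clamp x) <= Rabs (y - x).
Proof. pose proof (Rle_abs (y - x)). pose proof (Rabs_maj2 (y - x)).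
  apply Rabs_le. unfold clamp, Rmax, Rmin. repeat destruct Rle_dec; lra. Qed.

Definition wext x := w (clamp x).
Lemma Cont_wext : Cont wext.
Proof.
  intros x. apply continuity_pt_filterlim. intros eps Heps.
  destruct (Hw_cont (clamp x) (clamp_in x) eps Heps) as [del [Hd H]].
  exists del. split; auto. intros y [_ Hy]. simpl in *. unfold R_dist in *. unfold wext.
  apply H. apply clamp_in. pose proof (clamp_lip x y). lra.
Qed.

Lemma exI f : Cont f -> ex_RInt (fun x => f x * w x) (-1) 1.
Proof.
  intros Hf. apply (ex_RInt_ext (fun x => f x * wext x)).
  { intros x Hx. rewrite Rmin_left, Rmax_right in Hx by lra. unfold wext. rewrite clamp_id; auto. lra. }
  apply (ex_RInt_continuous (V:=R_CompleteNormedModule)). intros z _. apply (Cont_mult f wext); auto. apply Cont_wext.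
Qed.

Lemma RInt_ext' (f g : R -> R) : (forall x, -1 < x < 1 -> f x = g x) -> RInt f (-1) 1 = RInt g (-1) 1.
Proof. intros H. apply RInt_ext. intros x Hx. rewrite Rmin_left, Rmax_right in Hx by lra. apply H; auto. Qed.

Definition ip (f g : R -> R) : R := RInt (fun x => f x * g x * w x) (-1) 1.

Lemma RInt_plus' (f g : R -> R) : ex_RInt f (-1) 1 -> ex_RInt g (-1) 1 ->
  RInt (fun x => f x + g x) (-1) 1 = RInt f (-1) 1 + RInt g (-1) 1.
Proof. intros H1 H2. exact (RInt_plus f g (-1) 1 H1 H2). Qed.
Lemma RInt_scal' (f : R -> R) c : ex_RInt f (-1) 1 ->
  RInt (fun x => c * f x) (-1) 1 = c * RInt f (-1) 1.
Proof. intros H1. exact (RInt_scal f (-1) 1 c H1). Qed.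

Lemma exI2 f g : Cont f -> Cont g -> ex_RInt (fun x => f x * g x * w x) (-1) 1.
Proof. intros. apply (exI (fun x => f x * g x)). apply Cont_mult; auto. Qed.

Lemma ip_sym f g : ip f g = ip g f.
Proof. unfold ip. apply RInt_ext'. intros; ring. Qed.
Lemma ip_ext f f' g : (forall x, f x = f' x) -> ip f g = ip f' g.
Proof. intros E; unfold ip. apply RInt_ext'. intros; rewrite E; ring. Qed.
Lemma ip_plus f1 f2 g : Cont f1 -> Cont f2 -> Cont g -> ip (fun x => f1 x + f2 x) g = ip f1 g + ip f2 g.
Proof. intros. unfold ip. rewrite <- RInt_plus' by (apply exI2; auto).
  apply RInt_ext'; intros; ring. Qed.
Lemma ip_scal c f g : Cont f -> Cont g -> ip (fun x => c * f x) g = c * ip f g.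
Proof. intros. unfold ip. rewrite <- RInt_scal' by (apply exI2; auto).
  apply RInt_ext'; intros; ring. Qed.
Lemma ip_zero g : ip (fun _ => 0) g = 0.
Proof. unfold ip. rewrite (RInt_ext' (fun x => 0 * g x * w x) (fun x => 0 * 1)) by (intros; ring).
  rewrite RInt_scal'. apply Rmult_0_l. apply ex_RInt_const. Qed.
Lemma ip_rs (F : nat -> R -> R) k g : (forall j, Cont (F j)) -> Cont g ->
  ip (fun x => rs (fun j => F j x) k) g = rs (fun j => ip (F j) g) k.
Proof. intros HF Hg. induction k; simpl. apply ip_zero.
  rewrite ip_plus; auto. rewrite IHk; auto. apply Cont_rs; auto. Qed.
Lemma ip_nonneg f : Cont f -> 0 <= ip f f.
Proof. intros Hf. rewrite <- (ip_zero (fun _ => 0)). unfold ip. apply RInt_le. lra.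
  apply exI2; apply Cont_const. apply exI2; auto.
  intros x Hx. assert (0 <= w x) by (apply Hw_nonneg; lra). assert (0 <= f x * f x) by nra. nra. Qed.

Definition xp (f g : R -> R) : R := RInt (fun x => x * f x * g x * w x) (-1) 1.
Lemma xp_ip f g : xp f g = ip (fun x => x * f x) g.
Proof. unfold xp, ip. apply RInt_ext'; intros; ring. Qed.
Lemma xp_sym f g : xp f g = xp g f.
Proof. unfold xp. apply RInt_ext'. intros; ring. Qed.
Lemma xp_le f : Cont f -> xp f f <= ip f f.
Proof. intros Hf. unfold xp, ip. apply RInt_le. lra.
  apply (exI2 (fun x => x * f x)); auto. apply Cont_mult; auto using Cont_id. apply exI2; auto.
  intros x Hx. assert (0 <= w x) by (apply Hw_nonneg; lra). assert (0 <= f x * f x) by nra.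
  assert (0 <= (1 - x) * (f x * f x * w x)) by (apply Rmult_le_pos; nra). nra. Qed.
End Anal.

Section Orth.
Variable w : R -> R.
Variables a b : nat -> R.
Hypothesis Hw_nonneg : forall x, -1 <= x <= 1 -> 0 <= w x.
Hypothesis Hw_cont : cont_on_11 w.
Hypothesis Hb_pos : forall l, 0 < b l.
Hypothesis Horth : forall k l,
     RInt (fun x => opq a b k x * opq a b l x * w x) (-1) 1
     = if Nat.eqb k l then 1 else 0.

Notation P := (opq a b).
Notation ip := (ip w).
Notation xp := (xp w).

Lemma CP l : Cont (P l).
Proof. apply Cont_opq. Qed.
Lemma Cps l : Cont (fun x => snd (opq_pair a b x l)).
Proof. apply Cont_opq. Qed.

Lemma ipPP k l : ip (P k) (P l) = if Nat.eqb k l then 1 else 0.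
Proof. apply Horth. Qed.

Lemma x_rec k x : x * P k x = b (S k) * P (S k) x + a k * P k x + b k * snd (opq_pair a b x k).
Proof. rewrite opq_S. field. pose proof (Hb_pos (S k)); lra. Qed.

Lemma xp_plus f1 f2 g : Cont f1 -> Cont f2 -> Cont g -> xp (fun x => f1 x + f2 x) g = xp f1 g + xp f2 g.
Proof. intros. rewrite !xp_ip. rewrite <- ip_plus; auto. apply ip_ext. intros; ring.
  apply Cont_mult; auto using Cont_id. apply Cont_mult; auto using Cont_id. Qed.
Lemma xp_scal c f g : Cont f -> Cont g -> xp (fun x => c * f x) g = c * xp f g.
Proof. intros. rewrite !xp_ip. rewrite <- ip_scal; auto. apply ip_ext. intros; ring.
  apply Cont_mult; auto using Cont_id. Qed.
Lemma xp_ext f f' g : (forall x, f x = f' x) -> xp f g = xp f' g.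
Proof. intros E. rewrite !xp_ip. apply ip_ext. intros; rewrite E; auto. Qed.
Lemma xp_rs (F : nat -> R -> R) k g : (forall j, Cont (F j)) -> Cont g ->
  xp (fun x => rs (fun j => F j x) k) g = rs (fun j => xp (F j) g) k.
Proof. intros HF Hg. induction k; simpl.
  rewrite xp_ip. rewrite (ip_ext w _ (fun _ => 0)). apply ip_zero. intros; ring.
  rewrite xp_plus; auto. rewrite IHk; auto. apply Cont_rs; auto. Qed.

Lemma Xpp l k : xp (P l) (P k) =
  (if Nat.eqb l (S k) then b (S k) else 0) + (if Nat.eqb l k then a k else 0)
  + (if Nat.eqb k (S l) then b k else 0).
Proof.
  rewrite xp_sym, xp_ip.
  rewrite (ip_ext w _ (fun x => b (S k) * P (S k) x + a k * P k x + b k * snd (opq_pair a b x k))) by apply x_rec.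
  rewrite !ip_plus; try apply Cont_scal; auto using CP, Cps; try apply Cont_plus; try apply Cont_scal; auto using CP, Cps.
  rewrite !ip_scal; auto using CP, Cps. rewrite !ipPP.
  rewrite (Nat.eqb_sym (S k) l), (Nat.eqb_sym k l).
  destruct k.
  - rewrite (ip_ext w _ (fun _ => 0)) by reflexivity. rewrite ip_zero. simpl.
    repeat match goal with |- context [if ?c then _ else _] => destruct c end; ring.
  - rewrite (ip_ext w _ (P k)) by (intros; apply opq_sndS). rewrite ipPP.
    cbn [Nat.eqb]. rewrite (Nat.eqb_sym k l).
    repeat match goal with |- context [if ?c then _ else _] => destruct c end; ring.
Qed.

Lemma ip_expand F G c : Cont F -> Cont G ->
  ip (fun x => F x + c * G x) (fun x => F x + c * G x) = ip F F + 2 * c * ip F G + c ^ 2 * ip G G.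
Proof. intros HF HG. assert (HcG : Cont (fun x => c * G x)) by (apply Cont_scal; auto).
  assert (HS : Cont (fun x => F x + c * G x)) by (apply Cont_plus; auto).
  rewrite ip_plus; auto. rewrite ip_scal; auto. rewrite (ip_sym w F), (ip_sym w G).
  rewrite ip_plus, ip_scal, ip_plus, ip_scal; auto. rewrite (ip_sym w G F). ring. Qed.
Lemma xp_expand F G c : Cont F -> Cont G ->
  xp (fun x => F x + c * G x) (fun x => F x + c * G x) = xp F F + 2 * c * xp F G + c ^ 2 * xp G G.
Proof. intros HF HG. assert (HcG : Cont (fun x => c * G x)) by (apply Cont_scal; auto).
  assert (HS : Cont (fun x => F x + c * G x)) by (apply Cont_plus; auto).
  rewrite xp_plus; auto. rewrite xp_scal; auto. rewrite (xp_sym w F), (xp_sym w G).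
  rewrite xp_plus, xp_scal, xp_plus, xp_scal; auto. rewrite (xp_sym w G F). ring. Qed.
Lemma ip_expand2 F G al be : Cont F -> Cont G ->
  ip (fun x => al * F x + be * G x) (fun x => al * F x + be * G x) = al^2 * ip F F + 2 * al * be * ip F G + be ^ 2 * ip G G.
Proof. intros HF HG. assert (CaF : Cont (fun x => al * F x)) by (apply Cont_scal; auto).
  rewrite (ip_expand (fun x => al * F x) G be); auto.
  rewrite (ip_scal w Hw_cont al F (fun x => al * F x)); auto.
  rewrite (ip_sym w F (fun x => al * F x)), (ip_scal w Hw_cont al F F); auto.
  rewrite (ip_scal w Hw_cont al F G); auto. ring. Qed.
Lemma xp_expand2 F G al be : Cont F -> Cont G ->
  xp (fun x => al * F x + be * G x) (fun x => al * F x + be * G x) = al^2 * xp F F + 2 * al * be * xp F G + be ^ 2 * xp G G.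
Proof. intros HF HG. assert (CaF : Cont (fun x => al * F x)) by (apply Cont_scal; auto).
  rewrite (xp_expand (fun x => al * F x) G be); auto.
  rewrite (xp_scal al F (fun x => al * F x)); auto.
  rewrite (xp_sym w F (fun x => al * F x)), (xp_scal al F F); auto.
  rewrite (xp_scal al F G); auto. ring. Qed.

Variable m : nat.
Definition Hd (hm : R) (h : nat -> R) x := hm * P m x + rs (fun l => h l * P l x) m.
Definition Tl (u : nat -> R) N x := rs (fun j => u (S j) * P (m + S j)%nat x) N.

Lemma CHd hm h : Cont (Hd hm h).
Proof. unfold Hd. apply Cont_plus. apply Cont_scal, CP. apply (Cont_rs (fun l x => h l * P l x)). intros; apply Cont_scal, CP. Qed.
Lemma CTl u N : Cont (Tl u N).
Proof. unfold Tl. apply (Cont_rs (fun j x => u (S j) * P (m + S j)%nat x)). intros; apply Cont_scal, CP. Qed.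

Lemma ip_ext2 f f' g g' : (forall x, f x = f' x) -> (forall x, g x = g' x) -> ip f g = ip f' g'.
Proof. intros E1 E2. unfold ip. apply RInt_ext'. intros; rewrite E1, E2; auto. Qed.
Lemma xp_ext2 f f' g g' : (forall x, f x = f' x) -> (forall x, g x = g' x) -> xp f g = xp f' g'.
Proof. intros E1 E2. unfold xp. apply RInt_ext'. intros; rewrite E1, E2; auto. Qed.
Lemma eqb_false i j : i <> j -> Nat.eqb i j = false.
Proof. apply Nat.eqb_neq. Qed.

Lemma Cont_rsP h k : Cont (fun x => rs (fun l => h l * P l x) k).
Proof. apply (Cont_rs (fun l x => h l * P l x)). intros; apply Cont_scal, CP. Qed.
Lemma Cont_scP c l : Cont (fun x => c * P l x).
Proof. apply Cont_scal, CP. Qed.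
Hint Resolve CP Cps CHd CTl Cont_rsP Cont_scP Hw_cont : cdb.

Lemma ip_Hd_P hm h l : (m < l)%nat -> ip (Hd hm h) (P l) = 0.
Proof. intros Hl. unfold Hd. rewrite ip_plus by auto with cdb. rewrite ip_scal by auto with cdb.
  rewrite ip_rs by auto with cdb. rewrite ipPP, eqb_false by lia.
  rewrite rs_zero. ring. intros j Hj. rewrite ip_scal, ipPP, eqb_false by (auto with cdb; lia). ring. Qed.

Lemma xp_Hd_P hm h l : (m < l)%nat -> xp (Hd hm h) (P l) = if Nat.eqb l (S m) then hm * b (S m) else 0.
Proof. intros Hl. unfold Hd. rewrite xp_plus by auto with cdb. rewrite xp_scal by auto with cdb.
  rewrite xp_rs by auto with cdb. rewrite Xpp, (eqb_false m (S l)), (eqb_false m l) by lia.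
  rewrite rs_zero. destruct (Nat.eqb l (S m)) eqn:E. apply Nat.eqb_eq in E; subst. ring. ring.
  intros j Hj. rewrite xp_scal, Xpp, !eqb_false by (auto with cdb; lia). ring. Qed.

Lemma ip_Tl_P u N L : (m + N < L)%nat -> ip (Tl u N) (P L) = 0.
Proof. intros HL. unfold Tl. rewrite ip_rs by auto with cdb. apply rs_zero. intros j Hj.
  rewrite ip_scal, ipPP, eqb_false by (auto with cdb; lia). ring. Qed.

Lemma xp_Tl_P u N : xp (Tl u N) (P (m + S N)%nat) =
  match N with O => 0 | S N' => u N * b (m + S N)%nat end.
Proof. unfold Tl. rewrite xp_rs by auto with cdb. destruct N as [|N'].
  - reflexivity.
  - simpl rs. rewrite rs_zero. rewrite xp_scal, Xpp by auto with cdb.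
    rewrite (eqb_false (m + S N') (S (m + S (S N')))), (eqb_false (m + S N')) by lia.
    rewrite (proj2 (Nat.eqb_eq _ _)) by lia. ring.
    intros j Hj. rewrite xp_scal, Xpp, !eqb_false by (auto with cdb; lia). ring. Qed.

Definition Nf0 (u : nat -> R) N := rs (fun j => u (S j) ^ 2) N.
Definition Ef0 (u : nat -> R) N := rs (fun j => a (m + S j)%nat * u (S j) ^ 2) N
   + 2 * rs (fun j => b (m + S j)%nat * u j * u (S j)) N.

Lemma headtail h u N :
  ip (fun x => Hd (u O) h x + Tl u N x) (fun x => Hd (u O) h x + Tl u N x) = ip (Hd (u O) h) (Hd (u O) h) + Nf0 u N /\
  xp (fun x => Hd (u O) h x + Tl u N x) (fun x => Hd (u O) h x + Tl u N x) = xp (Hd (u O) h) (Hd (u O) h) + Ef0 u N.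
Proof.
  induction N as [|N IH].
  - unfold Nf0, Ef0, Tl; simpl. split.
    + rewrite (ip_ext w _ (Hd (u O) h)) by (intros; ring). rewrite ip_sym.
      rewrite (ip_ext w _ (Hd (u O) h)) by (intros; ring). ring.
    + rewrite (xp_ext _ (Hd (u O) h)) by (intros; ring). rewrite xp_sym.
      rewrite (xp_ext _ (Hd (u O) h)) by (intros; ring). ring.
  - set (F := fun x => Hd (u O) h x + Tl u N x).
    assert (CF : Cont F) by (apply Cont_plus; auto using CHd, CTl).
    assert (E : forall x, Hd (u O) h x + Tl u (S N) x = F x + u (S N) * P (m + S N)%nat x).
    { intros; unfold F, Tl; simpl; ring. }
    destruct IH as [IH1 IH2]. fold F in IH1, IH2.
    assert (ipFP : ip F (P (m + S N)%nat) = 0).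
    { unfold F. rewrite ip_plus; auto using CHd, CTl, CP. rewrite ip_Hd_P, ip_Tl_P by lia. ring. }
    assert (xpFP : xp F (P (m + S N)%nat) = b (m + S N)%nat * u N).
    { unfold F. rewrite xp_plus; auto using CHd, CTl, CP. rewrite xp_Hd_P, xp_Tl_P by lia.
      destruct N as [|N'].
      + rewrite (proj2 (Nat.eqb_eq _ _)) by lia. replace (m + 1)%nat with (S m) by lia. ring.
      + rewrite eqb_false by lia. ring. }
    split.
    + rewrite (ip_ext2 _ _ _ _ E E).
      rewrite ip_expand; auto using CP. rewrite IH1, ipFP, ipPP, Nat.eqb_refl.
      unfold Nf0; simpl. ring.
    + rewrite (xp_ext2 _ _ _ _ E E).
      rewrite xp_expand; auto using CP. rewrite IH2, xpFP, Xpp.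
      rewrite Nat.eqb_refl, !eqb_false by lia.
      unfold Ef0; simpl. ring.
Qed.
End Orth.

Lemma cabs2_eq z : cabs2 z = fst z ^ 2 + snd z ^ 2.
Proof. unfold cabs2, Cmod. rewrite pow2_sqrt; auto. nra. Qed.

Lemma csum_fst f k : fst (csum_lt f k) = rs (fun l => fst (f l)) k.
Proof. induction k; simpl; auto. rewrite <- IHk. reflexivity. Qed.
Lemma csum_snd f k : snd (csum_lt f k) = rs (fun l => snd (f l)) k.
Proof. induction k; simpl; auto. rewrite <- IHk. reflexivity. Qed.

Lemma sumC_fst (f : nat -> C) m N : fst (sum_n_m f (m + 1) (m + N)) = rs (fun j => fst (f (m + S j)%nat)) N.
Proof. induction N.
  - rewrite sum_n_m_zero by lia. reflexivity.
  - replace (m + S N)%nat with (S (m + N)) by lia. rewrite sum_n_Sm by lia. simpl. rewrite IHN.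
    replace (S (m + N)) with (m + S N)%nat by lia. reflexivity. Qed.
Lemma sumC_snd (f : nat -> C) m N : snd (sum_n_m f (m + 1) (m + N)) = rs (fun j => snd (f (m + S j)%nat)) N.
Proof. induction N.
  - rewrite sum_n_m_zero by lia. reflexivity.
  - replace (m + S N)%nat with (S (m + N)) by lia. rewrite sum_n_Sm by lia. simpl. rewrite IHN.
    replace (S (m + N)) with (m + S N)%nat by lia. reflexivity. Qed.

Lemma fst_Cplus (z1 z2 : C) : fst (Cplus z1 z2) = fst z1 + fst z2. Proof. reflexivity. Qed.
Lemma snd_Cplus (z1 z2 : C) : snd (Cplus z1 z2) = snd z1 + snd z2. Proof. reflexivity. Qed.
Lemma fst_Cmult (z1 z2 : C) : fst (Cmult z1 z2) = fst z1 * fst z2 - snd z1 * snd z2. Proof. reflexivity. Qed.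
Lemma snd_Cmult (z1 z2 : C) : snd (Cmult z1 z2) = fst z1 * snd z2 + snd z1 * fst z2. Proof. reflexivity. Qed.

Section Cpx.
Variable w : R -> R.
Variables a b : nat -> R.
Hypothesis Hw_nonneg : forall x, -1 <= x <= 1 -> 0 <= w x.
Hypothesis Hw_cont : cont_on_11 w.
Hypothesis Hb_pos : forall l, 0 < b l.
Hypothesis Horth : forall k l,
     RInt (fun x => opq a b k x * opq a b l x * w x) (-1) 1
     = if Nat.eqb k l then 1 else 0.
Variable m : nat.
Variable e : nat -> C.

Notation P := (opq a b).
Notation ip := (ip w).
Notation xp := (xp w).
Hint Resolve CP Cps CHd CTl Cont_rsP Cont_scP Hw_cont : cdb.

Definition Rr x := P m x + rs (fun l => fst (e l) * P l x) m.
Definition Ri x := rs (fun l => snd (e l) * P l x) m.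
Lemma CRr : Cont Rr. Proof. unfold Rr. apply Cont_plus; auto with cdb. Qed.
Lemma CRi : Cont Ri. Proof. unfold Ri. auto with cdb. Qed.
Hint Resolve CRr CRi : cdb.

Lemma Rpoly_fst x : fst (Rpoly a b m e x) = Rr x.
Proof. unfold Rpoly, Rr. simpl. rewrite csum_fst. f_equal. apply rs_ext. intros; unfold cterm; simpl; ring. Qed.
Lemma Rpoly_snd x : snd (Rpoly a b m e x) = Ri x.
Proof. unfold Rpoly, Ri. simpl. rewrite csum_snd. rewrite Rplus_0_l. apply rs_ext. intros; unfold cterm; simpl; ring. Qed.

Lemma wnorm2_split f : Cont (fun x => fst (f x)) -> Cont (fun x => snd (f x)) ->
  wnorm2 w f = ip (fun x => fst (f x)) (fun x => fst (f x)) + ip (fun x => snd (f x)) (fun x => snd (f x)).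
Proof. intros H1 H2. unfold wnorm2, ip. rewrite <- RInt_plus' by (apply exI2; auto).
  apply RInt_ext'. intros. rewrite cabs2_eq. ring. Qed.
Lemma eps_split f : Cont (fun x => fst (f x)) -> Cont (fun x => snd (f x)) ->
  eps w f = xp (fun x => fst (f x)) (fun x => fst (f x)) + xp (fun x => snd (f x)) (fun x => snd (f x)).
Proof. intros H1 H2. unfold eps, xp. rewrite <- RInt_plus'.
  apply RInt_ext'. intros. rewrite cabs2_eq. ring.
  apply (exI2 w Hw_cont (fun x => x * fst (f x))); auto. apply Cont_mult; auto using Cont_id.
  apply (exI2 w Hw_cont (fun x => x * snd (f x))); auto. apply Cont_mult; auto using Cont_id. Qed.

Lemma wnorm2_R : wnorm2 w (Rpoly a b m e) = ip Rr Rr + ip Ri Ri.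
Proof. rewrite wnorm2_split. apply f_equal2; apply ip_ext2; intros; auto using Rpoly_fst, Rpoly_snd.
  apply (Cont_ext Rr). intros; rewrite Rpoly_fst; auto. auto with cdb.
  apply (Cont_ext Ri). intros; rewrite Rpoly_snd; auto. auto with cdb. Qed.
Lemma eps_R : eps w (Rpoly a b m e) = xp Rr Rr + xp Ri Ri.
Proof. rewrite eps_split. apply f_equal2; apply xp_ext2; intros; auto using Rpoly_fst, Rpoly_snd.
  apply (Cont_ext Rr). intros; rewrite Rpoly_fst; auto. auto with cdb.
  apply (Cont_ext Ri). intros; rewrite Rpoly_snd; auto. auto with cdb. Qed.

Lemma wnorm2_R_ge1 : 1 <= wnorm2 w (Rpoly a b m e).
Proof. rewrite wnorm2_R.
  assert (0 <= ip Ri Ri) by (apply ip_nonneg; auto with cdb).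
  set (Q := fun x => rs (fun l => fst (e l) * P l x) m).
  assert (CQ : Cont Q) by (unfold Q; auto with cdb).
  assert (E : ip Rr Rr = ip (fun x => P m x + 1 * Q x) (fun x => P m x + 1 * Q x)) by (apply ip_ext2; intros; unfold Rr, Q; ring).
  rewrite E, ip_expand by auto with cdb. rewrite ipPP by auto. rewrite Nat.eqb_refl.
  assert (0 <= ip Q Q) by (apply ip_nonneg; auto).
  assert (ip (P m) Q = 0).
  { rewrite ip_sym. unfold Q. rewrite ip_rs by auto with cdb. apply rs_zero. intros j Hj.
    rewrite ip_scal, ipPP by auto with cdb. rewrite eqb_false by lia. ring. }
  nra. Qed.

Section Coords.
Variable c : nat -> C.
Variable N : nat.
Variable Pf : R -> C.
Hypothesis HPf : forall x, Pf x = Cplus (Cmult (c m) (Rpoly a b m e x)) (sum_n_m (fun l => cterm a b c l x) (m + 1) (m + N)).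
Definition U j := fst (c (m + j)%nat).
Definition V j := snd (c (m + j)%nat).
Lemma U0 : U 0 = fst (c m). Proof. unfold U; rewrite Nat.add_0_r; auto. Qed.
Lemma V0 : V 0 = snd (c m). Proof. unfold V; rewrite Nat.add_0_r; auto. Qed.
Definition hU l := U 0 * fst (e l) - V 0 * snd (e l).
Definition hV l := U 0 * snd (e l) + V 0 * fst (e l).

Lemma Pf_fst x : fst (Pf x) = Hd a b m (U 0) hU x + Tl a b m U N x.
Proof. rewrite HPf, fst_Cplus, fst_Cmult, sumC_fst. unfold Hd, Tl, hU. rewrite Rpoly_fst, Rpoly_snd, U0, V0. unfold Rr, Ri.
  rewrite (rs_ext (fun j => fst (cterm a b c (m + S j) x)) (fun j => U (S j) * P (m + S j)%nat x)).
  rewrite (rs_ext (fun l => (fst (c m) * fst (e l) - snd (c m) * snd (e l)) * P l x)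
     (fun l => fst (c m) * (fst (e l) * P l x) + (- snd (c m)) * (snd (e l) * P l x))) by (intros; ring).
  rewrite rs_plus, !rs_scal. ring.
  intros; unfold cterm, U; simpl; ring. Qed.
Lemma Pf_snd x : snd (Pf x) = Hd a b m (V 0) hV x + Tl a b m V N x.
Proof. rewrite HPf, snd_Cplus, snd_Cmult, sumC_snd. unfold Hd, Tl, hV. rewrite Rpoly_fst, Rpoly_snd, U0, V0. unfold Rr, Ri.
  rewrite (rs_ext (fun j => snd (cterm a b c (m + S j) x)) (fun j => V (S j) * P (m + S j)%nat x)).
  rewrite (rs_ext (fun l => (fst (c m) * snd (e l) + snd (c m) * fst (e l)) * P l x)
     (fun l => fst (c m) * (snd (e l) * P l x) + (snd (c m)) * (fst (e l) * P l x))) by (intros; ring).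
  rewrite rs_plus, !rs_scal. ring.
  intros; unfold cterm, V; simpl; ring. Qed.

Lemma CPf1 : Cont (fun x => fst (Pf x)).
Proof. apply (Cont_ext (fun x => Hd a b m (U 0) hU x + Tl a b m U N x)). intros; rewrite Pf_fst; auto.
  apply Cont_plus; auto with cdb. Qed.
Lemma CPf2 : Cont (fun x => snd (Pf x)).
Proof. apply (Cont_ext (fun x => Hd a b m (V 0) hV x + Tl a b m V N x)). intros; rewrite Pf_snd; auto.
  apply Cont_plus; auto with cdb. Qed.

Lemma HdU x : Hd a b m (U 0) hU x = U 0 * Rr x + (- V 0) * Ri x.
Proof. unfold Hd, hU, Rr, Ri.
  rewrite (rs_ext (fun l => (U 0 * fst (e l) - V 0 * snd (e l)) * P l x)
     (fun l => U 0 * (fst (e l) * P l x) + (- V 0) * (snd (e l) * P l x))) by (intros; ring).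
  rewrite rs_plus, !rs_scal. ring. Qed.
Lemma HdV x : Hd a b m (V 0) hV x = V 0 * Rr x + U 0 * Ri x.
Proof. unfold Hd, hV, Rr, Ri.
  rewrite (rs_ext (fun l => (U 0 * snd (e l) + V 0 * fst (e l)) * P l x)
     (fun l => U 0 * (snd (e l) * P l x) + (V 0) * (fst (e l) * P l x))) by (intros; ring).
  rewrite rs_plus, !rs_scal. ring. Qed.

Lemma coords_wnorm2 : wnorm2 w Pf = wnorm2 w (Rpoly a b m e) * (U 0 ^ 2 + V 0 ^ 2) + Nf0 U N + Nf0 V N.
Proof. rewrite wnorm2_split by (apply CPf1 || apply CPf2).
  rewrite (ip_ext2 _ _ _ _ _ Pf_fst Pf_fst), (ip_ext2 _ _ _ _ _ Pf_snd Pf_snd).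
  rewrite (proj1 (headtail w a b Hw_cont Hb_pos Horth m hU U N)).
  rewrite (proj1 (headtail w a b Hw_cont Hb_pos Horth m hV V N)).
  rewrite (ip_ext2 _ _ _ _ _ HdU HdU), (ip_ext2 _ _ _ _ _ HdV HdV).
  rewrite !ip_expand2 by auto with cdb. rewrite wnorm2_R. ring. Qed.

Lemma coords_eps : eps w Pf = eps w (Rpoly a b m e) * (U 0 ^ 2 + V 0 ^ 2) + Ef0 a b m U N + Ef0 a b m V N.
Proof. rewrite eps_split by (apply CPf1 || apply CPf2).
  rewrite (xp_ext2 _ _ _ _ _ Pf_fst Pf_fst), (xp_ext2 _ _ _ _ _ Pf_snd Pf_snd).
  rewrite (proj2 (headtail w a b Hw_cont Hb_pos Horth m hU U N)).
  rewrite (proj2 (headtail w a b Hw_cont Hb_pos Horth m hV V N)).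
  rewrite (xp_ext2 _ _ _ _ _ HdU HdU), (xp_ext2 _ _ _ _ _ HdV HdV).
  rewrite !xp_expand2 by auto with cdb. rewrite eps_R. ring. Qed.

Lemma coords_le : eps w Pf <= wnorm2 w Pf.
Proof. rewrite eps_split, wnorm2_split by (apply CPf1 || apply CPf2).
  pose proof (xp_le w Hw_nonneg Hw_cont _ CPf1). pose proof (xp_le w Hw_nonneg Hw_cont _ CPf2). lra. Qed.
End Coords.
End Cpx.

Section Frame.
Variables a b : nat -> R.
Hypothesis Hb_pos : forall l, 0 < b l.
Variable m : nat.
Variables g d t : R.
Notation ph j := (corecp a b j m g d t).

Definition Nf (u : nat -> R) N := d * u O ^ 2 + Nf0 u N.
Definition Ef (u : nat -> R) N := (a m + g) * u O ^ 2 + Ef0 a b m u N.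

Lemma bne k : b k <> 0. Proof. pose proof (Hb_pos k); lra. Qed.

Lemma ph_rec j : ph (S (S j)) = ((t - a (m + S j)%nat) * ph (S j) - b (m + S j)%nat * ph j) / b (m + S (S j))%nat.
Proof. rewrite corecp_SS. replace (m + S j + 1)%nat with (m + S (S j))%nat by lia. auto. Qed.
Lemma ph_1 : ph 1 = (d * t - a m - g) / b (m + 1)%nat.
Proof. apply corecp_1. Qed.

Lemma EV N : t * Nf (fun j => ph j) N - Ef (fun j => ph j) N = b (m + S N)%nat * ph (S N) * ph N.
Proof. induction N.
  - unfold Nf, Ef, Nf0, Ef0. cbn [rs]. rewrite corecp_0, ph_1. replace (m + 1)%nat with (m + S 0)%nat by lia.
    field. apply bne.
  - unfold Nf, Ef, Nf0, Ef0 in *. cbn [rs]. rewrite ph_rec.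
    match type of IHN with ?L = _ => 
      transitivity (L + (t * ph (S N) ^ 2 - a (m + S N)%nat * ph (S N) ^ 2 - 2 * (b (m + S N)%nat * ph N * ph (S N)))) end.
    ring. rewrite IHN. field. apply bne.
Qed.

Definition gsT (u : nat -> R) j := b (m + S j)%nat * ph j * ph (S j) * (u j / ph j - u (S j) / ph (S j)) ^ 2.

Lemma GS N u : (forall j, (j <= N)%nat -> ph j <> 0) ->
  t * Nf u N - Ef u N = rs (gsT u) N + b (m + S N)%nat * ph (S N) / ph N * u N ^ 2.
Proof. induction N; intros Hnz.
  - unfold Nf, Ef, Nf0, Ef0. cbn [rs]. rewrite corecp_0, ph_1. replace (m + 1)%nat with (m + S 0)%nat by lia.
    field. apply bne.
  - assert (IH := IHN (fun j Hj => Hnz j ltac:(lia))).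
    unfold Nf, Ef, Nf0, Ef0 in *. cbn [rs].
    match type of IH with ?L = _ =>
      transitivity (L + (t * u (S N) ^ 2 - a (m + S N)%nat * u (S N) ^ 2 - 2 * (b (m + S N)%nat * u N * u (S N)))) end.
    ring. rewrite IH. unfold gsT. rewrite ph_rec. field.
    split; [apply bne | split; apply Hnz; lia].
Qed.

Section Pos.
Variable N : nat.
Hypothesis Hpos : forall j, (j <= N)%nat -> 0 < ph j.
Hypothesis Hzero : ph (S N) = 0.

Lemma gsT_nonneg u j : (j < N)%nat -> 0 <= gsT u j.
Proof. intros Hj. unfold gsT. pose proof (Hb_pos (m + S j)%nat). pose proof (Hpos j ltac:(lia)).
  pose proof (Hpos (S j) ltac:(lia)). apply Rmult_le_pos. repeat apply Rmult_le_pos; lra. apply pow2_ge_0. Qed.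

Lemma GS0 u : t * Nf u N - Ef u N = rs (gsT u) N.
Proof. rewrite GS. rewrite Hzero. unfold Rdiv. ring. intros j Hj. pose proof (Hpos j Hj); lra. Qed.

Lemma GS_le u : Ef u N <= t * Nf u N.
Proof. pose proof (GS0 u). assert (0 <= rs (gsT u) N) by (apply rs_nonneg; intros; apply gsT_nonneg; auto). lra. Qed.

Lemma GS_eq u : Ef u N = t * Nf u N -> forall j, (j <= N)%nat -> u j = u O * ph j.
Proof. intros E. pose proof (GS0 u). assert (Hs : rs (gsT u) N = 0) by lra.
  assert (Hq : forall j, (j < N)%nat -> u (S j) / ph (S j) = u j / ph j).
  { intros j Hj. pose proof (rs_zero_terms _ _ (fun i Hi => gsT_nonneg u i Hi) Hs j Hj) as Z.
    unfold gsT in Z. pose proof (Hb_pos (m + S j)%nat). pose proof (Hpos j ltac:(lia)).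
    pose proof (Hpos (S j) ltac:(lia)).
    assert (0 < b (m + S j)%nat * ph j * ph (S j)) by (repeat apply Rmult_lt_0_compat; lra).
    assert (Z2 : (u j / ph j - u (S j) / ph (S j)) ^ 2 = 0).
    { apply Rmult_integral in Z. destruct Z; auto. lra. }
    assert (Z3 : u j / ph j - u (S j) / ph (S j) = 0) by nra. lra. }
  assert (Hc : forall j, (j <= N)%nat -> u j / ph j = u O).
  { induction j; intros Hj. rewrite corecp_0. field. rewrite Hq by lia. apply IHj; lia. }
  intros j Hj. specialize (Hc j Hj). pose proof (Hpos j Hj).
  rewrite <- Hc. field. lra. Qed.

Lemma GS_prop u s : (forall j, (j <= N)%nat -> u j = s * ph j) -> Ef u N = t * Nf u N.
Proof. intros Hu. pose proof (GS0 u). rewrite rs_zero in H. lra.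
  intros j Hj. unfold gsT. rewrite !Hu by lia. pose proof (Hpos j ltac:(lia)). pose proof (Hpos (S j) ltac:(lia)).
  replace (s * ph j / ph j - s * ph (S j) / ph (S j)) with 0 by (field; lra). ring. Qed.
End Pos.
End Frame.

Lemma Nf_ext d u u' N : (forall j, (j <= N)%nat -> u j = u' j) -> Nf d u N = Nf d u' N.
Proof. intros H. unfold Nf, Nf0. rewrite H by lia. f_equal. apply rs_ext. intros; rewrite H by lia; auto. Qed.
Lemma Ef_ext a b m g u u' N : (forall j, (j <= N)%nat -> u j = u' j) -> Ef a b m g u N = Ef a b m g u' N.
Proof. intros H. unfold Ef, Ef0. rewrite H by lia. f_equal. f_equal. apply rs_ext. intros; rewrite H by lia; auto.
  f_equal. apply rs_ext. intros; rewrite !H by lia; auto. Qed.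
Lemma Nf_scal d s u N : Nf d (fun j => s * u j) N = s ^ 2 * Nf d u N.
Proof. unfold Nf, Nf0. rewrite (rs_ext _ (fun j => s ^ 2 * u (S j) ^ 2)) by (intros; ring). rewrite rs_scal. ring. Qed.
Lemma Nf0_nonneg u N : 0 <= Nf0 u N.
Proof. unfold Nf0. apply rs_nonneg. intros; apply pow2_ge_0. Qed.

Lemma Rmin_abs x y : Rmin x y = (x + y - Rabs (x - y)) / 2.
Proof. unfold Rmin. destruct Rle_dec.
  rewrite Rabs_left1 by lra. field. rewrite Rabs_right by lra. field. Qed.

Lemma Cont_Rmin f g : Cont f -> Cont g -> Cont (fun x => Rmin (f x) (g x)).
Proof. intros Hf Hg. apply (Cont_ext (fun x => (f x + g x - Rabs (f x - g x)) / 2)).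
  intros; rewrite Rmin_abs; auto. apply Cont_div. apply Cont_minus. apply Cont_plus; auto.
  intros x. apply continuous_Rabs_comp. apply Cont_minus; auto. Qed.

Section Posit.
Variables a b : nat -> R.
Hypothesis Hb_pos : forall l, 0 < b l.
Variable m : nat.
Variables g d : R.
Hypothesis Hd : 0 < d.
Notation ph j t := (corecp a b j m g d t).
Variable N : nat.
Variable lam : R.
Hypothesis Hlam : largest_zero_11 (corecp a b (S N) m g d) lam.
Hypothesis HZ : forall z, ph (S N) z = 0 -> z <= 1.

Lemma prop0 k s : ph k s = 0 -> ph (S k) s = 0 -> False.
Proof. revert s. induction k; intros s H1 H2.
  rewrite corecp_0 in H1. lra.
  apply (IHk s); auto. rewrite ph_rec in H2. rewrite H1 in H2.
  pose proof (bne b Hb_pos (m + S (S k))). pose proof (bne b Hb_pos (m + S k)).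
  assert (E : b (m + S k)%nat * ph k s = 0).
  { unfold Rdiv in H2. apply Rmult_integral in H2. destruct H2 as [H2|H2]. lra.
    apply Rinv_neq_0_compat in H. lra. }
  apply Rmult_integral in E. destruct E; lra. Qed.

Lemma big : exists T, lam < T /\ forall j, (j <= S N)%nat -> 0 < ph j T.
Proof.
  set (K := rs (fun j => Rabs (a (m + S j)%nat) + b (m + S j)%nat + b (m + S (S j))%nat) N).
  set (T := Rabs lam + 1 + Rabs ((a m + g + b (m + 1)%nat) / d) + K).
  assert (HK : 0 <= K). { apply rs_nonneg. intros. pose proof (Rabs_pos (a (m + S j)%nat)).
    pose proof (Hb_pos (m + S j)%nat). pose proof (Hb_pos (m + S (S j))%nat). lra. }
  assert (HT1 : (a m + g + b (m + 1)%nat) / d <= T).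
  { pose proof (Rle_abs ((a m + g + b (m + 1)%nat) / d)). pose proof (Rabs_pos lam). unfold T. lra. }
  assert (HT2 : forall j, (j < N)%nat -> a (m + S j)%nat + b (m + S j)%nat + b (m + S (S j))%nat <= T).
  { intros j Hj. pose proof (rs_le_term (fun j => Rabs (a (m + S j)%nat) + b (m + S j)%nat + b (m + S (S j))%nat) N j).
    pose proof (Rle_abs (a (m + S j)%nat)). pose proof (Rabs_pos lam). pose proof (Rabs_pos ((a m + g + b (m + 1)%nat) / d)).
    assert (Rabs (a (m + S j)%nat) + b (m + S j)%nat + b (m + S (S j))%nat <= K).
    { apply H; auto. intros. pose proof (Rabs_pos (a (m + S i)%nat)).
      pose proof (Hb_pos (m + S i)%nat). pose proof (Hb_pos (m + S (S i))%nat). lra. }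
    unfold T. lra. }
  assert (Cl : forall j, (j <= N)%nat -> 0 < ph j T <= ph (S j) T).
  { induction j; intros Hj.
    - rewrite corecp_0, ph_1. split. lra. pose proof (Hb_pos (m + 1)%nat).
      apply (Rmult_le_reg_r (b (m + 1)%nat)). auto. unfold Rdiv. rewrite Rmult_assoc, Rinv_l by lra.
      assert (d * ((a m + g + b (m + 1)%nat) / d) <= d * T) by (apply Rmult_le_compat_l; lra).
      replace (d * ((a m + g + b (m + 1)%nat) / d)) with (a m + g + b (m + 1)%nat) in H0 by (field; lra). lra.
    - destruct (IHj ltac:(lia)) as [H1 H2]. split. lra.
      rewrite ph_rec. pose proof (HT2 j ltac:(lia)).
      pose proof (Hb_pos (m + S j)%nat). pose proof (Hb_pos (m + S (S j))%nat).
      apply (Rmult_le_reg_r (b (m + S (S j))%nat)). auto. unfold Rdiv. rewrite Rmult_assoc, Rinv_l by lra.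
      assert ((T - a (m + S j)%nat - b (m + S j)%nat - b (m + S (S j))%nat) * ph (S j) T >= 0) by (apply Rle_ge, Rmult_le_pos; lra).
      nra. }
  exists T. split. pose proof (Rle_abs lam). pose proof (Rabs_pos ((a m + g + b (m + 1)%nat) / d)). unfold T. lra.
  intros j Hj. destruct (Nat.eq_dec j (S N)). subst. destruct (Cl N ltac:(lia)); lra. destruct (Cl j ltac:(lia)); lra.
Qed.

Fixpoint gm (K : nat) (t : R) : R :=
  match K with O => ph 0 t | S K' => Rmin (gm K' t) (ph (S K') t) end.
Lemma Cgm K : Cont (gm K).
Proof. induction K; simpl. apply Cont_corec. apply Cont_Rmin; auto. apply Cont_corec. Qed.
Lemma gm_le K t j : (j <= K)%nat -> gm K t <= ph j t.
Proof. induction K; intros Hj; simpl. replace j with 0%nat by lia. lra.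
  destruct (Nat.eq_dec j (S K)). subst. apply Rmin_r. pose proof (IHK ltac:(lia)). pose proof (Rmin_l (gm K t) (ph (S K) t)). lra. Qed.
Lemma gm_att K t : exists j, (j <= K)%nat /\ gm K t = ph j t.
Proof. induction K; simpl. exists 0%nat; split; auto.
  destruct IHK as [j [Hj E]]. unfold Rmin. destruct Rle_dec. exists j; split; auto. exists (S K); split; auto. Qed.

Lemma pos_lam : forall j, (j <= N)%nat -> 0 < ph j lam.
Proof.
  destruct Hlam as [Hl1 [Hl2 Hl3]].
  intros j Hj. destruct (Rlt_or_le 0 (ph j lam)) as [Hp|Hn]; auto. exfalso.
  destruct big as [T [HT HTp]].
  assert (G1 : gm N lam <= 0) by (pose proof (gm_le N lam j Hj); lra).
  assert (G2 : 0 < gm N T) by (destruct (gm_att N T) as [i [Hi E]]; rewrite E; apply HTp; lia).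
  destruct (IVT_cor (gm N) lam T (Cont_continuity _ (Cgm N)) ltac:(lra) ltac:(nra)) as [s0 [Hs0 Gs0]].
  assert (Hge : forall i, (i <= N)%nat -> 0 <= ph i s0) by (intros i Hi; pose proof (gm_le N s0 i Hi); lra).
  destruct (gm_att N s0) as [k [Hk Ek]]. rewrite Gs0 in Ek. symmetry in Ek.
  destruct k as [|i]. rewrite corecp_0 in Ek; lra.
  assert (Hrec := ph_rec a b m g d s0 i). rewrite Ek in Hrec.
  pose proof (Hb_pos (m + S (S i))%nat). pose proof (Hb_pos (m + S i)%nat).
  assert (Hi0 : 0 <= ph i s0) by (apply Hge; lia).
  assert (Hneg : ph (S (S i)) s0 <= 0).
  { rewrite Hrec. unfold Rdiv. rewrite Rmult_0_r, Rminus_0_l.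
    assert (0 <= / b (m + S (S i))%nat) by (left; apply Rinv_0_lt_compat; lra).
    assert (0 <= b (m + S i)%nat * ph i s0) by (apply Rmult_le_pos; lra).
    rewrite <- Ropp_mult_distr_l. assert (0 <= b (m + S i)%nat * ph i s0 * / b (m + S (S i))%nat) by (apply Rmult_le_pos; lra). lra. }
  assert (Hi1 : ph i s0 <> 0) by (intros Z; apply (prop0 i s0); auto).
  destruct (Nat.eq_dec (S i) N) as [EN|NE].
  - subst N. assert (Hneg' : ph (S (S i)) s0 < 0).
    { rewrite Hrec. unfold Rdiv. rewrite Rmult_0_r, Rminus_0_l.
      assert (0 < / b (m + S (S i))%nat) by (apply Rinv_0_lt_compat; lra).
      assert (0 < ph i s0) by lra. assert (0 < b (m + S i)%nat * ph i s0) by (apply Rmult_lt_0_compat; lra).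
      rewrite <- Ropp_mult_distr_l. assert (0 < b (m + S i)%nat * ph i s0 * / b (m + S (S i))%nat) by (apply Rmult_lt_0_compat; lra). lra. }
    assert (Hs : lam < s0). { destruct (Rle_lt_or_eq_dec lam s0) as [?|E]; try lra. subst s0. lra. }
    pose proof (HTp (S (S i)) (le_n _)).
    destruct (IVT_cor (corecp a b (S (S i)) m g d) s0 T (Cont_continuity _ (proj1 (Cont_corec a b m g d (S (S i)))))
       ltac:(lra) ltac:(nra)) as [z [Hz Ez]].
    pose proof (HZ z Ez). pose proof (Hl3 z ltac:(lra) Ez). lra.
  - assert (0 <= ph (S (S i)) s0) by (apply Hge; lia).
    apply (prop0 (S i) s0); auto. lra.
Qed.
End Posit.

Lemma C_eq (z1 z2 : C) : fst z1 = fst z2 -> snd z1 = snd z2 -> z1 = z2.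
Proof. destruct z1, z2; simpl; intros; subst; auto. Qed.

Lemma sumC_mult k (f : nat -> C) m N : Cmult k (sum_n_m f (m + 1) (m + N)) = sum_n_m (fun l => Cmult k (f l)) (m + 1) (m + N).
Proof. induction N.
  - rewrite !sum_n_m_zero by lia. apply C_eq; simpl; ring.
  - replace (m + S N)%nat with (S (m + N)) by lia. rewrite !sum_n_Sm by lia.
    replace (S (m + N)) with (m + S N)%nat by lia. rewrite <- IHN.
    apply C_eq; simpl; ring. Qed.

Section Core.
Variable w : R -> R.
Variables a b : nat -> R.
Hypothesis Hw_nonneg : forall x, -1 <= x <= 1 -> 0 <= w x.
Hypothesis Hw_cont : cont_on_11 w.
Hypothesis Hb_pos : forall l, 0 < b l.
Hypothesis Horth : forall k l,
     RInt (fun x => opq a b k x * opq a b l x * w x) (-1) 1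
     = if Nat.eqb k l then 1 else 0.
Variable m : nat.
Variable e : nat -> C.
Variable N : nat.
Variable lam : R.
Let Rp := Rpoly a b m e.
Let d := wnorm2 w Rp.
Let g := eps w Rp - a m.
Hypothesis Hlam : largest_zero_11 (corecp a b (S N) m g d) lam.

Notation PiR := (inPi_R a b Rp m (m + N)).

Lemma Hdpos : 0 < d.
Proof. pose proof (wnorm2_R_ge1 w a b Hw_nonneg Hw_cont Horth m e). unfold d, Rp. lra. Qed.

Lemma link c Pf : (forall x, Pf x = Cplus (Cmult (c m) (Rp x)) (sum_n_m (fun l => cterm a b c l x) (m + 1) (m + N))) ->
  wnorm2 w Pf = Nf d (U m c) N + Nf d (V m c) N /\
  eps w Pf = Ef a b m g (U m c) N + Ef a b m g (V m c) N /\
  eps w Pf <= wnorm2 w Pf.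
Proof. intros H. split; [|split].
  - rewrite (coords_wnorm2 w a b Hw_cont Hb_pos Horth m e c N Pf H). unfold Nf, d, Rp. ring.
  - rewrite (coords_eps w a b Hw_cont Hb_pos Horth m e c N Pf H). unfold Ef, g, Rp. ring.
  - apply (coords_le w a b Hw_nonneg Hw_cont m e c N Pf H).
Qed.

Lemma HZ : forall z, corecp a b (S N) m g d z = 0 -> z <= 1.
Proof. intros z Hz.
  set (c := fun l => RtoC (corecp a b (l - m) m g d z)).
  set (Pf := fun x => Cplus (Cmult (c m) (Rp x)) (sum_n_m (fun l => cterm a b c l x) (m + 1) (m + N))).
  destruct (link c Pf (fun x => eq_refl)) as [H1 [H2 H3]].
  assert (EU : forall j, (j <= N)%nat -> U m c j = corecp a b j m g d z).
  { intros j _. unfold U, c. simpl. f_equal. lia. }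
  assert (EV0 : forall j, (j <= N)%nat -> V m c j = 0 * corecp a b j m g d z).
  { intros j _. unfold V, c. simpl. ring. }
  rewrite (Nf_ext _ _ _ _ EU), (Nf_ext _ _ _ _ EV0), Nf_scal in H1.
  rewrite (Ef_ext _ _ _ _ _ _ _ EU) in H2.
  assert (Ef a b m g (V m c) N = 0 * (Nf d (fun j => corecp a b j m g d z) N)).
  { rewrite (Ef_ext _ _ _ _ _ _ _ EV0). unfold Ef, Ef0.
    rewrite !rs_zero. rewrite corecp_0. ring. intros; ring. intros; ring. }
  pose proof (EV a b Hb_pos m g d z N) as HE. rewrite Hz in HE.
  assert (Hpos : 0 < Nf d (fun j => corecp a b j m g d z) N).
  { unfold Nf. rewrite corecp_0. pose proof (Nf0_nonneg (fun j => corecp a b j m g d z) N). pose proof Hdpos. nra. }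
  nra.
Qed.

Notation ph j := (corecp a b j m g d lam).
Lemma phpos j : (j <= N)%nat -> 0 < ph j.
Proof. apply (pos_lam a b Hb_pos m g d Hdpos N lam Hlam HZ). Qed.
Lemma phzero : ph (S N) = 0.
Proof. destruct Hlam as [_ [H _]]; auto. Qed.

Definition c0 l := RtoC (ph (l - m)).
Definition Phi x := Cplus (Rp x) (sum_n_m (fun l => RtoC (ph (l - m) * opq a b l x)) (m + 1) (m + N)).

Lemma kPhi_repr kappa x : Cmult kappa (Phi x) =
  Cplus (Cmult ((fun l => Cmult kappa (c0 l)) m) (Rp x)) (sum_n_m (fun l => cterm a b (fun l => Cmult kappa (c0 l)) l x) (m + 1) (m + N)).
Proof. unfold Phi. rewrite Cmult_plus_distr_l. f_equal.
  - unfold c0. rewrite Nat.sub_diag, corecp_0. f_equal. apply C_eq; simpl; ring.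
  - rewrite sumC_mult. apply sum_n_m_ext. intros l. unfold cterm, c0. apply C_eq; simpl; ring.
Qed.

Lemma kU kappa j : (j <= N)%nat -> U m (fun l => Cmult kappa (c0 l)) j = fst kappa * ph j.
Proof. intros. unfold U, c0. replace (m + j - m)%nat with j by lia. simpl. ring. Qed.
Lemma kV kappa j : (j <= N)%nat -> V m (fun l => Cmult kappa (c0 l)) j = snd kappa * ph j.
Proof. intros. unfold V, c0. replace (m + j - m)%nat with j by lia. simpl. ring. Qed.

Lemma kPhi_props kappa Pf : (forall x, Pf x = Cmult kappa (Phi x)) ->
  PiR Pf /\ eps w Pf = lam * wnorm2 w Pf.
Proof. intros H. split.
  - exists (fun l => Cmult kappa (c0 l)). intros x. rewrite H, kPhi_repr. auto.
  - destruct (link (fun l => Cmult kappa (c0 l)) Pf) as [H1 [H2 H3]].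
    { intros x. rewrite H, kPhi_repr. auto. }
    rewrite H1, H2.
    rewrite (GS_prop a b Hb_pos m g d lam N phpos phzero _ (fst kappa)) by (intros; apply kU; auto).
    rewrite (GS_prop a b Hb_pos m g d lam N phpos phzero _ (snd kappa)) by (intros; apply kV; auto).
    ring.
Qed.

Lemma upper Pf : unit_sphere w PiR Pf -> eps w Pf <= lam.
Proof. intros [[c Hc] Hn]. destruct (link c Pf Hc) as [H1 [H2 H3]].
  pose proof (GS_le a b Hb_pos m g d lam N phpos phzero (U m c)).
  pose proof (GS_le a b Hb_pos m g d lam N phpos phzero (V m c)). nra. Qed.

Lemma NfPhi_pos : 0 < Nf d (fun j => ph j) N.
Proof. unfold Nf. cbv beta. rewrite corecp_0. pose proof (Nf0_nonneg (fun j => ph j) N). pose proof Hdpos. nra. Qed.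

Definition kap0 := RtoC (/ sqrt (Nf d (fun j => ph j) N)).

Lemma cand : unit_sphere w PiR (fun x => Cmult kap0 (Phi x)) /\ eps w (fun x => Cmult kap0 (Phi x)) = lam.
Proof.
  destruct (kPhi_props kap0 (fun x => Cmult kap0 (Phi x)) (fun x => eq_refl)) as [H1 H2].
  destruct (link (fun l => Cmult kap0 (c0 l)) (fun x => Cmult kap0 (Phi x))) as [W _].
  { intros x. rewrite kPhi_repr. auto. }
  assert (Hw1 : wnorm2 w (fun x => Cmult kap0 (Phi x)) = 1).
  { rewrite W. rewrite (Nf_ext _ _ _ _ (kU kap0)), (Nf_ext _ _ _ _ (kV kap0)), !Nf_scal.
    unfold kap0; simpl. pose proof NfPhi_pos.
    set (q := Nf d (fun j => ph j) N) in *. assert (Hs := sqrt_sqrt q ltac:(lra)). assert (0 < sqrt q) by (apply sqrt_lt_R0; lra). assert (E : / sqrt q * (/ sqrt q * 1) * q + 0 * (0 * 1) * q = q / (sqrt q * sqrt q)) by (field; lra). rewrite E, Hs. field. lra. }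
  split. split; auto. rewrite H2, Hw1. ring.
Qed.

Lemma max_part : max_eps_is w (unit_sphere w PiR) lam.
Proof. split. exists (fun x => Cmult kap0 (Phi x)). apply cand. apply upper. Qed.

Lemma iff_part Pf : is_maximizer w (unit_sphere w PiR) Pf <->
  exists kappa : C, (forall x, Pf x = Cmult kappa (Phi x)) /\ wnorm2 w Pf = 1.
Proof. split.
  - intros [Hs Hmax]. destruct Hs as [[c Hc] Hn] eqn:Ehs.
    pose proof (Hmax _ (proj1 cand)) as Hge. rewrite (proj2 cand) in Hge.
    pose proof (upper Pf Hs).
    destruct (link c Pf Hc) as [H1 [H2 H3]].
    pose proof (GS_le a b Hb_pos m g d lam N phpos phzero (U m c)).
    pose proof (GS_le a b Hb_pos m g d lam N phpos phzero (V m c)).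
    assert (EqU : Ef a b m g (U m c) N = lam * Nf d (U m c) N) by nra.
    assert (EqV : Ef a b m g (V m c) N = lam * Nf d (V m c) N) by nra.
    pose proof (GS_eq a b Hb_pos m g d lam N phpos phzero _ EqU) as HU.
    pose proof (GS_eq a b Hb_pos m g d lam N phpos phzero _ EqV) as HV.
    exists (c m). split; auto. intros x. rewrite Hc. unfold Phi.
    rewrite Cmult_plus_distr_l. f_equal.
    rewrite sumC_mult. apply sum_n_m_ext_loc. intros l Hl.
    specialize (HU (l - m)%nat ltac:(lia)). specialize (HV (l - m)%nat ltac:(lia)).
    unfold U, V in HU, HV. replace (m + (l - m))%nat with l in HU, HV by lia.
    rewrite Nat.add_0_r in HU, HV.
    unfold cterm. apply C_eq; simpl; rewrite ?HU, ?HV; ring.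
  - intros [kappa [Hk Hn]]. destruct (kPhi_props kappa Pf Hk) as [H1 H2].
    split. split; auto. intros g' Hg'. rewrite H2, Hn. rewrite Rmult_1_r. apply upper; auto.
Qed.
End Core.

Lemma lz_ext q q' lam : (forall y, q y = 0 <-> q' y = 0) -> largest_zero_11 q lam -> largest_zero_11 q' lam.
Proof. intros H [H1 [H2 H3]]. split; auto. split. apply H; auto. intros y Hy Hz. apply H3; auto. apply H; auto. Qed.

Lemma maxim_ext w (S1 S2 : (R -> C) -> Prop) P : (forall f, S1 f <-> S2 f) ->
  (is_maximizer w (unit_sphere w S1) P <-> is_maximizer w (unit_sphere w S2) P).
Proof. intros H. unfold is_maximizer, unit_sphere. split; intros [[A B] C0]; split; try split; auto; try apply H; auto.
  intros g0 [G1 G2]. apply C0. split; auto. apply H; auto.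
  intros g0 [G1 G2]. apply C0. split; auto. apply H; auto. Qed.
Lemma maxeps_ext w (S1 S2 : (R -> C) -> Prop) M : (forall f, S1 f <-> S2 f) ->
  max_eps_is w (unit_sphere w S1) M -> max_eps_is w (unit_sphere w S2) M.
Proof. intros H [[f [[Hf1 Hf2] Hf3]] Hb]. split. exists f. split; auto. split; auto. apply H; auto.
  intros g0 [G1 G2]. apply Hb. split; auto. apply H; auto. Qed.

Lemma corec_assoc a b m x k : corecp a b k m 0 1 x = assocp a b k m x /\ corecp a b (S k) m 0 1 x = assocp a b (S k) m x.
Proof. induction k.
  - split. reflexivity. rewrite corecp_1, assocp_S. simpl snd. unfold assocp. simpl fst.
    rewrite !Nat.add_0_r. f_equal. ring.
  - destruct IHk as [H1 H2]. split; auto. rewrite corecp_SS, assocp_S, assoc_sndS, H1, H2. auto.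
Qed.

Lemma opq_assoc a b x k : opq a b k x = assocp a b k 0 x / b 0%nat /\ opq a b (S k) x = assocp a b (S k) 0 x / b 0%nat.
Proof. induction k.
  - split. reflexivity. rewrite opq_S, assocp_S. simpl snd. rewrite opq_0. unfold assocp at 1. simpl fst.
    cbn [Nat.add]. unfold Rdiv. ring.
  - destruct IHk as [H1 H2]. split; auto. rewrite opq_S, assocp_S, assoc_sndS, opq_sndS, H1, H2.
    replace (0 + S k + 1)%nat with (S (S k)) by lia. simpl (0 + S k)%nat. unfold Rdiv. ring.
Qed.

Lemma sumC_mult0 k (f : nat -> C) n : Cmult k (sum_n_m f 0 n) = sum_n_m (fun l => Cmult k (f l)) 0 n.
Proof. induction n.
  - rewrite !sum_n_n. auto.
  - rewrite !sum_n_Sm by lia. rewrite <- IHn. apply C_eq; simpl; ring. Qed.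

Definition e0 : nat -> C := fun _ => RtoC 0.

Section Parts.
Variable w : R -> R.
Variables a b : nat -> R.
Hypothesis Hw_nonneg : forall x, -1 <= x <= 1 -> 0 <= w x.
Hypothesis Hw_cont : cont_on_11 w.
Hypothesis Hb_pos : forall l, 0 < b l.
Hypothesis Horth : forall k l,
     RInt (fun x => opq a b k x * opq a b l x * w x) (-1) 1
     = if Nat.eqb k l then 1 else 0.

Lemma Rpoly_e0 m x : Rpoly a b m e0 x = RtoC (opq a b m x).
Proof. apply C_eq.
  - unfold Rpoly. rewrite fst_Cplus, csum_fst, rs_zero. simpl; ring. intros; unfold cterm, e0; simpl; ring.
  - unfold Rpoly. rewrite snd_Cplus, csum_snd, rs_zero. simpl; ring. intros; unfold cterm, e0; simpl; ring.
Qed.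

Lemma wnorm2_e0 m : wnorm2 w (Rpoly a b m e0) = 1.
Proof. unfold wnorm2. rewrite (RInt_ext' _ (fun x => opq a b m x * opq a b m x * w x)).
  rewrite Horth, Nat.eqb_refl; auto.
  intros x _. rewrite Rpoly_e0, cabs2_eq. simpl. ring. Qed.

Lemma eps_e0 m : eps w (Rpoly a b m e0) = a m.
Proof. unfold eps. rewrite (RInt_ext' _ (fun x => x * opq a b m x * opq a b m x * w x)).
  change (xp w (opq a b m) (opq a b m) = a m). rewrite (Xpp w a b Hw_cont Hb_pos Horth).
  rewrite Nat.eqb_refl, !eqb_false by lia. ring.
  intros x _. rewrite Rpoly_e0, cabs2_eq. simpl. ring. Qed.

Lemma part2 m n lam (Hmn : (m <= n)%nat) (Hl : largest_zero_11 (assocp a b (n - m + 1) m) lam) :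
  (forall P : R -> C,
      is_maximizer w (unit_sphere w (inPi_m a b m n)) P <->
      exists kappa : C,
        (forall x, P x = Cmult kappa
           (sum_n_m (fun l => RtoC (assocp a b (l - m) m lam * opq a b l x)) m n))
        /\ wnorm2 w P = 1)
   /\ max_eps_is w (unit_sphere w (inPi_m a b m n)) lam.
Proof.
  set (N := (n - m)%nat) in *. assert (En : n = (m + N)%nat) by (unfold N; lia).
  replace (N + 1)%nat with (S N) in Hl by lia. rewrite En. clearbody N. clear En Hmn.
  assert (HL : largest_zero_11 (corecp a b (S N) m (eps w (Rpoly a b m e0) - a m) (wnorm2 w (Rpoly a b m e0))) lam).
  { rewrite eps_e0, wnorm2_e0. replace (a m - a m) with 0 by ring.
    apply (lz_ext (assocp a b (S N) m)); auto. intros y. rewrite (proj1 (corec_assoc a b m y (S N))). tauto. }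
  assert (Hset : forall f, inPi_R a b (Rpoly a b m e0) m (m + N) f <-> inPi_m a b m (m + N) f).
  { intros f; split; intros [c Hc]; exists c; intros x; rewrite Hc.
    - rewrite Rpoly_e0, (sum_Sn_m _ m (m + N)) by lia. replace (S m) with (m + 1)%nat by lia. reflexivity.
    - rewrite Rpoly_e0, (sum_Sn_m _ m (m + N)) by lia. replace (S m) with (m + 1)%nat by lia. reflexivity. }
  assert (PhiE : forall x, Phi w a b m e0 N lam x =
     sum_n_m (fun l => RtoC (assocp a b (l - m) m lam * opq a b l x)) m (m + N)).
  { intros x. unfold Phi. rewrite eps_e0, wnorm2_e0, Rpoly_e0. replace (a m - a m) with 0 by ring.
    rewrite (sum_Sn_m _ m (m + N)) by lia. replace (S m) with (m + 1)%nat by lia.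
    rewrite Nat.sub_diag. unfold assocp at 1. simpl fst.
    assert (Es : sum_n_m (fun l => RtoC (corecp a b (l - m) m 0 1 lam * opq a b l x)) (m + 1) (m + N) =
       sum_n_m (fun l => RtoC (assocp a b (l - m) m lam * opq a b l x)) (m + 1) (m + N)).
    { apply sum_n_m_ext. intros l. rewrite (proj1 (corec_assoc a b m lam (l - m))). auto. }
    rewrite Es. apply C_eq; simpl; ring. }
  split.
  - intros P. rewrite <- (maxim_ext w _ _ P Hset).
    rewrite (iff_part w a b Hw_nonneg Hw_cont Hb_pos Horth m e0 N lam HL P).
    split; intros [k [H1 H2]]; exists k; split; auto; intros x; rewrite H1; rewrite PhiE; auto.
  - apply (maxeps_ext w _ _ lam Hset). apply (max_part w a b Hw_nonneg Hw_cont Hb_pos Horth m e0 N lam HL).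
Qed.

Lemma part1 n lam (Hl : largest_zero_11 (opq a b (n + 1)) lam) :
  ((forall P : R -> C,
      is_maximizer w (unit_sphere w (inPi a b n)) P <->
      exists kappa : C,
        (forall x, P x = Cmult kappa
           (sum_n_m (fun l => RtoC (opq a b l lam * opq a b l x)) 0 n))
        /\ wnorm2 w P = 1)
   /\ max_eps_is w (unit_sphere w (inPi a b n)) lam).
Proof.
  assert (HL2 : largest_zero_11 (assocp a b (n - 0 + 1) 0) lam).
  { rewrite Nat.sub_0_r. apply (lz_ext (opq a b (n + 1))); auto. intros y.
    rewrite (proj1 (opq_assoc a b y (n + 1))). pose proof (bne b Hb_pos 0) as Hb0.
    pose proof (Rinv_neq_0_compat _ Hb0) as Hib0.
    split; intros Hz. unfold Rdiv in Hz. apply Rmult_integral in Hz. destruct Hz as [Hz|Hz]; auto.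
    contradiction. rewrite Hz. unfold Rdiv; ring. }
  destruct (part2 0 n lam (Nat.le_0_l n) HL2) as [Hi Hm].
  assert (SE : forall x, sum_n_m (fun l => RtoC (assocp a b (l - 0) 0 lam * opq a b l x)) 0 n =
     Cmult (RtoC (b 0%nat)) (sum_n_m (fun l => RtoC (opq a b l lam * opq a b l x)) 0 n)).
  { intros x. rewrite sumC_mult0. apply sum_n_m_ext. intros l. rewrite Nat.sub_0_r.
    rewrite (proj1 (opq_assoc a b lam l)). pose proof (bne b Hb_pos 0). apply C_eq; simpl; field; auto. }
  pose proof (bne b Hb_pos 0) as Hb0.
  split; [| exact Hm].
  intros P. change (inPi a b n) with (inPi_m a b 0 n). rewrite Hi. split.
  - intros [k [H1 H2]]. exists (Cmult k (RtoC (b 0%nat))). split; auto. intros x. rewrite H1, SE.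
    apply C_eq; simpl; ring.
  - intros [k [H1 H2]]. exists (Cmult k (RtoC (/ b 0%nat))). split; auto. intros x. rewrite H1, SE.
    apply C_eq; simpl; field; auto.
Qed.

End Parts.

Theorem theorem2p8
  (w : R -> R) (a b : nat -> R) (m n : nat) (e : nat -> C)
  (lam1 lam2 lam3 : R)
  (Hw_nonneg : forall x, -1 <= x <= 1 -> 0 <= w x)
  (Hw_cont : cont_on_11 w)
  (Hb_pos : forall l, 0 < b l)
  (Horth : forall k l,
     RInt (fun x => opq a b k x * opq a b l x * w x) (-1) 1
     = if Nat.eqb k l then 1 else 0)
  (Hmn : (m <= n)%nat)
  (Hlam1 : largest_zero_11 (opq a b (n + 1)) lam1)
  (Hlam2 : largest_zero_11 (assocp a b (n - m + 1) m) lam2)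
  (Hlam3 : largest_zero_11
     (corecp a b (n - m + 1) m
        (eps w (Rpoly a b m e) - a m) (wnorm2 w (Rpoly a b m e))) lam3) :
  (* (1) *)
  ((forall P : R -> C,
      is_maximizer w (unit_sphere w (inPi a b n)) P <->
      exists kappa : C,
        (forall x, P x = Cmult kappa
           (sum_n_m (fun l => RtoC (opq a b l lam1 * opq a b l x)) 0 n))
        /\ wnorm2 w P = 1)
   /\ max_eps_is w (unit_sphere w (inPi a b n)) lam1)
  /\
  (* (2) *)
  ((forall P : R -> C,
      is_maximizer w (unit_sphere w (inPi_m a b m n)) P <->
      exists kappa : C,
        (forall x, P x = Cmult kappa
           (sum_n_m (fun l => RtoC (assocp a b (l - m) m lam2 * opq a b l x)) m n))
        /\ wnorm2 w P = 1)
   /\ max_eps_is w (unit_sphere w (inPi_m a b m n)) lam2)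
  /\
  (* (3) *)
  (let gR := eps w (Rpoly a b m e) - a m in
   let dR := wnorm2 w (Rpoly a b m e) in
   (forall P : R -> C,
      is_maximizer w (unit_sphere w (inPi_R a b (Rpoly a b m e) m n)) P <->
      exists kappa : C,
        (forall x, P x = Cmult kappa
           (Cplus (Rpoly a b m e x)
              (sum_n_m (fun l => RtoC (corecp a b (l - m) m gR dR lam3 * opq a b l x))
                 (m + 1) n)))
        /\ wnorm2 w P = 1)
   /\ max_eps_is w (unit_sphere w (inPi_R a b (Rpoly a b m e) m n)) lam3).

Proof.
  split; [| split].
  - apply part1; auto.
  - apply part2; auto. 
  - intros gR dR.
    set (N := (n - m)%nat).
    assert (HL : largest_zero_11 (corecp a b (S N) m (eps w (Rpoly a b m e) - a m) (wnorm2 w (Rpoly a b m e))) lam3).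
    { replace (S N) with (n - m + 1)%nat by (unfold N; lia). exact Hlam3. }
    assert (En : n = (m + N)%nat) by (unfold N; lia).
    clearbody N. subst n.
    split.
    + intros P. exact (iff_part w a b Hw_nonneg Hw_cont Hb_pos Horth m e N lam3 HL P).
    + exact (max_part w a b Hw_nonneg Hw_cont Hb_pos Horth m e N lam3 HL).
Qed.
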